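(* Let $U$ be a $d\times d$ complex matrix, and define $\mathfrak{C}_{\mathbf{ab}}(U)=\frac{1}{d}\operatorname{tr}\big(D_{\mathbf a}^\dagger U D_{\mathbf b} U^\dagger\big)$ and $\mathfrak{D}_{\mathbf{ab}}(U)=|\mathfrak{C}_{\mathbf{ab}}(U)|^2$ for $\mathbf a,\mathbf b\in\mathbb{Z}_{d_L}^{2n}$. Then the $d^2\times d^2$ matrix $\mathfrak{D}(U)=(\mathfrak{D}_{\mathbf{ab}}(U))_{\mathbf a,\mathbf b}$ is bistochastic (nonnegative with all row sums and all column sums equal to $1$) if and only if $U$ is unitary.
   Context: Let $d_L\ge 2$ and $n\ge1$ be integers and $d=d_L^n$. On $\mathbb{C}^{d_L}$ with computational basis $\{|k\rangle\}_{k\in\mathbb{Z}_{d_L}}$, let $Z|k\rangle=\omega^k|k\rangle$, $X|k\rangle=|k+1\rangle$ (arithmetic mod $d_L$), $\omega=e^{2\pi i/d_L}$, $\tau=-e^{i\pi/d_L}$, and for $(a_1,a_2)\in\mathbb{Z}_{d_L}^2$ set $D_{(a_1,a_2)}=\tau^{a_1a_2}X^{a_1}Z^{a_2}$. For $\mathbf a=\mathbf a_1\oplus\cdots\oplus\mathbf a_n\in\mathbb{Z}_{d_L}^{2n}$ (each $\mathbf a_i\in\mathbb{Z}_{d_L}^2$), the displacement operator on $(\mathbb{C}^{d_L})^{\otimes n}\cong\mathbb{C}^d$ is $D_{\mathbf a}=D_{\mathbf a_1}\otimes\cdots\otimes D_{\mathbf a_n}$. (The case $n=1$ is the single-qudit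 Weyl–Heisenberg group.) *)

(* Defs.v *)
(* Complex numbers: an arbitrary numClosedFieldType C
   (this includes the complex numbers 'complex R' for R : realType, and algC). *)
From HB Require Import structures.
From mathcomp Require Import all_boot all_order all_algebra.
From mathcomp Require Export spectral.
Set Implicit Arguments. Unset Strict Implicit. Unset Printing Implicit Defensive.
Import Order.TTheory GRing.Theory Num.Theory.
Local Open Scope ring_scope.
Local Open Scope sesquilinear_scope.

Section Weyl.
Variable C : numClosedFieldType.

(* tau = - e^{i pi / dL};  dL.-root (-1) is the dL-th root of -1 with minimal
   nonnegative argument, i.e. e^{i pi/dL}. *)
Definition wh_tau (dL : nat) : C := - (dL.-root (-1)).
(* omega = e^{2 pi i / dL} = tau^2 *)
Definition wh_omega (dL : nat) : C := (dL.-root (-1)) ^+ 2.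

Definition shift_pow (dL a : nat) : 'M[C]_dL :=
  \matrix_(j < dL, k < dL) ((j : nat) == ((k : nat) + a) %% dL)%N%:R.
Definition clock_pow (dL a : nat) : 'M[C]_dL :=
  \matrix_(j < dL, k < dL) (((j : nat) == k)%:R * wh_omega dL ^+ (a * (k : nat))%N).

(* single-qudit displacement D_(a1,a2) = tau^(a1 a2) X^a1 Z^a2,
   a1, a2 taken as their representatives in {0,...,dL-1} *)
Definition displ1 (dL : nat) (a : 'I_dL * 'I_dL) : 'M[C]_dL :=
  wh_tau dL ^+ ((a.1 : nat) * (a.2 : nat))%N *: (shift_pow dL a.1 *m clock_pow dL a.2).

End Weyl.

(* i-th tensor factor index (big-endian / Kronecker ordering) of a
   computational basis index k of (C^dL)^{\otimes n} = C^(dL^n):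
   k = \sum_i k_i dL^(n-1-i). *)
Lemma digit_lt (dL n : nat) (k : 'I_(dL ^ n)) (i : 'I_n) :
  ((k %/ dL ^ (n.-1 - i)) %% dL < dL)%N.
Proof.
apply: ltn_pmod; case: dL k => [|//] k.
case: n k i => [|n] k [i Hi] //; have := ltn_ord k.
by rewrite [X in (_ < X)%N]exp0n.
Qed.

Definition digit (dL n : nat) (k : 'I_(dL ^ n)) (i : 'I_n) : 'I_dL :=
  Ordinal (digit_lt k i).

(* Z_dL^{2n} = (Z_dL^2)^n *)
Definition phase_pt (dL n : nat) := {ffun 'I_n -> 'I_dL * 'I_dL}.

(* D_a = D_{a_1} (x) ... (x) D_{a_n}, as a dL^n x dL^n matrix (Kronecker product) *)
Definition displ (C : numClosedFieldType) (dL n : nat) (a : phase_pt dL n)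
  : 'M[C]_(dL ^ n) :=
  \matrix_(j, k) \prod_(i < n) @displ1 C dL (a i) (digit j i) (digit k i).

Definition frakC (C : numClosedFieldType) (dL n : nat) (U : 'M[C]_(dL ^ n))
  (a b : phase_pt dL n) : C :=
  (dL ^ n)%:R^-1 * \tr ((@displ C dL n a) ^t* *m U *m @displ C dL n b *m U ^t*).

Definition frakD (C : numClosedFieldType) (dL n : nat) (U : 'M[C]_(dL ^ n))
  (a b : phase_pt dL n) : C :=
  `|frakC U a b| ^+ 2.

Definition bistochastic (C : numClosedFieldType) (I : finType) (M : I -> I -> C) :=
  [/\ forall i j, 0 <= M i j,
      forall i, \sum_j M i j = 1 &
      forall j, \sum_i M i j = 1].

(* Main.v *)
Require Import Defs.
From mathcomp Require Import all_boot all_order all_algebra spectral.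
From mathcomp Require Import all_field cyclic.
From mathcomp Require Import ring zify.
Set Implicit Arguments. Unset Strict Implicit. Unset Printing Implicit Defensive.
Import Order.TTheory GRing.Theory Num.Theory.
Local Open Scope ring_scope.

Lemma prim_root_ex (C : numClosedFieldType) (t : nat) :
  (0 < t)%N -> exists z : C, t.-primitive_root z.
Proof.
move=> t0.
have [rs Hp] := closed_field_poly_normal ('X^t - 1 : {poly C}).
have := monicXnsubC (1 : C) t0; rewrite polyC1 => /monicP Hl.
rewrite Hl scale1r in Hp.
have sep : separable_poly ('X^t - 1 : {poly C}).
  by apply: separable_Xn_sub_1; rewrite pnatr_eq0 -lt0n.
have urs : uniq rs by rewrite -separable_prod_XsubC -Hp.
have ars : all t.-unity_root rs.
  apply/allP => z zin; have : root ('X^t - 1) z by rewrite Hp root_prod_XsubC.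
  by [].
have srs : size rs = t.
  by apply: succn_inj; rewrite -(size_prod_XsubC rs id) -Hp size_Xn_sub_1.
have /hasP [z _ zp] := has_prim_root t0 ars urs (eq_leq (esym srs)).
by exists z.
Qed.

Section Prim.
Variable C : numClosedFieldType.

Lemma unit_conj (z : C) : `|z| = 1 -> z * z^* = 1.
Proof. by move=> h; rewrite -normCK h expr1n. Qed.

Lemma unit_of_pow (z : C) (t : nat) : (0 < t)%N -> `|z ^+ t| = 1 -> `|z| = 1.
Proof. by move=> t0 h; apply/eqP; rewrite -(pexpr_eq1 t0) ?normr_ge0 // -normrX h. Qed.

Lemma dist_re (u : C) : `|u| = 1 -> (1 - u) * (1 - u)^* = 2 - 2 * 'Re u.
Proof.
move=> nu; have uu := unit_conj nu.
rewrite ReE rmorphB rmorph1 /=.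
have h2 : (2 : C) != 0 by rewrite pnatr_eq0.
rewrite mulrBl !mulrBr !mul1r mulr1 uu mulrC divfK //.
ring.
Qed.


Lemma closer_root (t : nat) (x : C) : (1 < t)%N -> `|x| = 1 -> x != 1 ->
  exists y, [/\ y ^+ t = x, `|y| = 1 & (1 - y) * (1 - y)^* < (1 - x) * (1 - x)^*].
Proof.
move=> t1 nx x1; have t0 : (0 < t)%N by apply: ltnW.
have [xi pxi] := prim_root_ex C t0.
have xit := prim_expr_order pxi.
have nxi : `|xi| = 1 by apply: (unit_of_pow t0); rewrite xit normr1.
set z0 := t.-root x; have z0t : z0 ^+ t = x by rewrite rootCK.
have nz0 : `|z0| = 1 by apply: (unit_of_pow t0); rewrite z0t.
pose S (k : nat) := \sum_(j < t) (z0 * xi ^+ k) ^+ j.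
have Hsum : \sum_(k < t) S k * (S k)^* = (t * t)%:R.
  have e1 k : S k * (S k)^* = \sum_(j < t) \sum_(l < t)
       (z0 ^+ j * z0^* ^+ l) * (xi ^+ j * xi^* ^+ l) ^+ k.
    rewrite /S rmorph_sum /= mulr_suml; apply: eq_bigr => j _.
    rewrite mulr_sumr; apply: eq_bigr => l _.
    rewrite rmorphXn rmorphM rmorphXn /= !exprMn -!exprM.
    by rewrite (mulnC k j) (mulnC k l); ring.
  under eq_bigr => k _ do rewrite e1.
  rewrite exchange_big /=.
  rewrite (eq_bigr (fun j : 'I_t => t%:R)); first by rewrite sumr_const card_ord natrM mulr_natl.
  move=> j _; rewrite exchange_big /= (bigD1 j) //= [X in _ + X]big1 ?addr0.
    rewrite -mulr_sumr -!exprMn !unit_conj ?expr1n ?mul1r //.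
    by rewrite (eq_bigr (fun _ => 1)) ?sumr_const ?card_ord // => k _; rewrite expr1n.
  move=> l ljl; rewrite -mulr_sumr; apply/eqP; rewrite mulf_eq0; apply/orP; right.
  set q := xi ^+ j * xi^* ^+ l.
  have q1 : q != 1.
    rewrite /q; apply: contra ljl => /eqP h.
    have : xi ^+ j = xi ^+ l.
      by rewrite -[RHS]mul1r -h -mulrA -exprMn (mulrC xi^*) unit_conj // expr1n mulr1.
    move/eqP; rewrite (eq_prim_root_expr pxi) => /eqP.
    by rewrite !modn_small // => /val_inj ->.
  have qt : q ^+ t = 1.
    by rewrite /q exprMn -!exprM mulnC exprM xit expr1n -rmorphXn /= mulnC exprM xit expr1n rmorph1 mulr1.
  have := subrX1 q t; rewrite qt subrr => /esym/eqP; rewrite mulf_eq0 subr_eq0 (negbTE q1) /=.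
  by [].
have [k Hk] : exists k : 'I_t, 1 < S k * (S k)^*.
  case: (boolP [exists k : 'I_t, 1 < S k * (S k)^*]) => [/existsP//|/existsPn H].
  have : \sum_(k < t) S k * (S k)^* <= \sum_(k < t) (1 : C).
    apply: ler_sum => k _; have := H k.
    by rewrite real_leNgt ?realE ?mul_conjC_ge0 ?ler01.
  rewrite Hsum sumr_const card_ord ler_nat => h; exfalso.
  move: h t1; clear; nia.
exists (z0 * xi ^+ k); split.
- by rewrite exprMn z0t -exprM mulnC exprM xit expr1n mulr1.
- by rewrite normrM normrX nz0 nxi expr1n mulr1.
set y := z0 * xi ^+ k.
have e : 1 - x = (1 - y) * S k.
  have yt : y ^+ t = x by rewrite /y exprMn z0t -exprM mulnC exprM xit expr1n mulr1.
  have := subrX1 y t; rewrite yt => h; rewrite -opprB h /S -/y; ring.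
have X0 : 0 < (1 - x) * (1 - x)^*.
  by rewrite lt_def mul_conjC_ge0 andbT mulf_eq0 conjC_eq0 orbb subr_eq0 eq_sym.
move: X0; rewrite e rmorphM /= mulrACA => X0.
have A0 : 0 < (1 - y) * (1 - y)^*.
  rewrite lt_def mul_conjC_ge0 andbT; apply: contraTneq X0 => ->.
  by rewrite mul0r ltxx.
by rewrite ltr_pMr.
Qed.


Lemma rootN1_prim (N : nat) : (1 < N)%N -> N.-primitive_root ((N.-root (-1 : C)) ^+ 2).
Proof.
move=> N1; have N0 : (0 < N)%N by apply: ltnW.
set r := N.-root (-1 : C).
have rN : r ^+ N = -1 by rewrite rootCK.
have nr : `|r| = 1 by apply: (unit_of_pow N0); rewrite rN normrN normr1.
have w1 : (r ^+ 2) ^+ N = 1 by rewrite exprAC rN sqrrN expr1n.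
have [m pm mdiv] := prim_order_exists N0 w1.
have m0 : (0 < m)%N := prim_order_gt0 pm.
case: (eqVneq m N) => [<- //| mN]; exfalso.
have mlt : (m < N)%N by rewrite ltn_neqAle mN dvdn_leq.
have two : (-1 : C) != 1.
  by rewrite eq_sym -addr_eq0 -(natrD C 1 1) pnatr_eq0.
have rm : r ^+ m = -1.
  have : (r ^+ m) ^+ 2 == 1 by rewrite exprAC (prim_expr_order pm).
  rewrite sqrf_eq1 => /orP[/eqP rm1|/eqP //].
  have : r ^+ N = 1 by rewrite -(divnK mdiv) mulnC exprM rm1 expr1n.
  by rewrite rN => /eqP; rewrite (negbTE two).
have t1 : (1 < N %/ m)%N by rewrite ltn_divRL // mul1n.
have r1 : r != 1 by apply: contra two => /eqP r1; rewrite -rN r1 expr1n.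
have [y [yt ny lt]] := closer_root t1 nr r1.
have yN : y ^+ N = -1 by rewrite -(divnK mdiv) exprM yt rm.
have key u : u ^+ N = -1 -> `|u| = 1 -> 0 <= 'Im u ->
    (1 - r) * (1 - r)^* <= (1 - u) * (1 - u)^*.
  move=> uN nu iu; rewrite !dist_re // lerD2l lerN2 ler_pM2l ?ltr0n //.
  exact: rootC_Re_max.
have : (1 - r) * (1 - r)^* <= (1 - y) * (1 - y)^*.
  have [iy|iy] := real_ge0P (Creal_Im y); first exact: key.
  have -> : (1 - y) * (1 - y)^* = (1 - y^*) * (1 - y^*)^*.
    rewrite mulrC; congr (_ * _); rewrite rmorphB rmorph1 //= conjCK //.
  apply: key; first by rewrite -rmorphXn yN rmorphN rmorph1.
    by rewrite norm_conjC.
  by rewrite Im_conj oppr_ge0 ltW.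
by move=> h; have := lt_le_trans lt h; rewrite ltxx.
Qed.

End Prim.

Section Single.
Variable C : numClosedFieldType.
Variable dL : nat.
Hypothesis hdL : (1 < dL)%N.

Let dL0 : (0 < dL)%N. Proof. exact: ltnW. Qed.

Lemma omega_prim : dL.-primitive_root (wh_omega C dL).
Proof. exact: rootN1_prim. Qed.

Lemma norm_rootN1 : `|dL.-root (-1 : C)| = 1.
Proof. by apply: (unit_of_pow dL0); rewrite rootCK // normrN normr1. Qed.

Lemma tau_unit : wh_tau C dL * (wh_tau C dL)^* = 1.
Proof. by apply: unit_conj; rewrite normrN norm_rootN1. Qed.

Lemma omega_unit : wh_omega C dL * (wh_omega C dL)^* = 1.
Proof. by apply: unit_conj; rewrite normrX norm_rootN1 expr1n. Qed.

Lemma geo_sum (xi : C) t (j l : 'I_t) : t.-primitive_root xi ->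
  \sum_(k < t) (xi ^+ j * xi^* ^+ l) ^+ k = (j == l)%:R * t%:R.
Proof.
move=> pxi; have t0 := prim_order_gt0 pxi; have xit := prim_expr_order pxi.
have nxi : `|xi| = 1 by apply: (unit_of_pow t0); rewrite xit normr1.
have [<-|ljl] := eqVneq j l.
  rewrite -exprMn unit_conj // expr1n mul1r.
  by rewrite (eq_bigr (fun _ => 1)) ?sumr_const ?card_ord // => k _; rewrite expr1n.
rewrite mul0r; set q := xi ^+ j * xi^* ^+ l.
have q1 : q != 1.
  rewrite /q; apply: contra ljl => /eqP h.
  have : xi ^+ j = xi ^+ l.
    by rewrite -[RHS]mul1r -h -mulrA -exprMn (mulrC xi^*) unit_conj // expr1n mulr1.
  move/eqP; rewrite (eq_prim_root_expr pxi) => /eqP.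
  by rewrite !modn_small // => /val_inj ->.
have qt : q ^+ t = 1.
  by rewrite /q exprMn -!exprM mulnC exprM xit expr1n -rmorphXn /= mulnC exprM xit expr1n rmorph1 mulr1.
have := subrX1 q t; rewrite qt subrr => /esym/eqP; rewrite mulf_eq0 subr_eq0 (negbTE q1) /=.
by move/eqP.
Qed.

Lemma displ1E (b : 'I_dL * 'I_dL) (x y : 'I_dL) :
  displ1 C b x y = wh_tau C dL ^+ (b.1 * b.2) *
    (((x : nat) == (y + b.1) %% dL)%N%:R * wh_omega C dL ^+ (b.2 * y)).
Proof.
rewrite /displ1 !mxE; congr (_ * _).
rewrite (bigD1 y) //= big1 ?addr0; first by rewrite !mxE eqxx mul1r.
by move=> k ky; rewrite !mxE; have /negbTE -> : (k : nat) != y := ky; rewrite mul0r mulr0.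
Qed.

Lemma shift_eq (x y b : 'I_dL) :
  ((x : nat) == (y + b) %% dL)%N = (b == Ordinal (ltn_pmod (x + (dL - y)) dL0)).
Proof.
apply/eqP/eqP => [h|h].
  apply: val_inj => /=; rewrite h modnDml addnAC subnKC ?(ltnW (ltn_ord y)) //.
  by rewrite modnDl modn_small.
rewrite h /= modnDmr addnCA subnKC ?(ltnW (ltn_ord y)) //.
by rewrite modnDr modn_small.
Qed.

Lemma count_shift (x y : 'I_dL) :
  \sum_(b < dL) (((x : nat) == (y + b) %% dL)%N%:R : C) = 1.
Proof.
under eq_bigr => b _ do rewrite shift_eq.
by rewrite (bigD1 (Ordinal (ltn_pmod (x + (dL - y)) dL0))) //= eqxx big1 ?addr0 // => b /negbTE ->.
Qed.

Lemma count_shift' (y b : 'I_dL) :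
  \sum_(x < dL) (((x : nat) == (y + b) %% dL)%N%:R : C) = 1.
Proof.
rewrite (bigD1 (Ordinal (ltn_pmod (y + b) dL0))) //= eqxx big1 ?addr0 // => x xn.
by rewrite -(inj_eq val_inj) /= in xn; rewrite (negbTE xn).
Qed.

Lemma D1_comp (x y z w : 'I_dL) :
  \sum_(b : 'I_dL * 'I_dL) displ1 C b x y * (displ1 C b z w)^* =
  dL%:R * ((x == z) && (y == w))%:R.
Proof.
rewrite (eq_bigr (fun b : 'I_dL * 'I_dL => (((x : nat) == (y + b.1) %% dL)%N%:R * ((z : nat) == (w + b.1) %% dL)%N%:R) *
   (wh_omega C dL ^+ y * (wh_omega C dL)^* ^+ w) ^+ b.2)); last first.
  move=> [b1 b2] _; rewrite !displ1E /=.
  set ta := wh_tau C dL; set om := wh_omega C dL.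
  have tt : ta ^+ (b1 * b2) * ta^* ^+ (b1 * b2) = 1.
    by rewrite -exprMn tau_unit expr1n.
  clearbody ta om.
  rewrite !rmorphM !rmorphXn /= !rmorph_nat.
  transitivity ((ta ^+ (b1 * b2) * ta^* ^+ (b1 * b2)) *
    (((x : nat) == (y + b1) %% dL)%N%:R * ((z : nat) == (w + b1) %% dL)%N%:R *
     (om ^+ (b2 * y) * om^* ^+ (b2 * w)))); first by ring.
  by rewrite tt mul1r exprMn -!exprM (mulnC y) (mulnC w).
rewrite -(pair_bigA _ (fun b1 b2 : 'I_dL => (((x : nat) == (y + b1) %% dL)%N%:R * ((z : nat) == (w + b1) %% dL)%N%:R) *
   (wh_omega C dL ^+ y * (wh_omega C dL)^* ^+ w) ^+ b2)) /=.
under eq_bigr => b1 _ do rewrite -mulr_sumr geo_sum ?omega_prim //.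
rewrite -mulr_suml.
have [<-|yw] := eqVneq y w; last by rewrite andbF /= !(mul0r, mulr0).
rewrite andbT /= mul1r mulrC; congr (_ * _).
have [<-|xz] := eqVneq x z; first by under eq_bigr => b _ do rewrite -natrM mulnb andbb; rewrite count_shift.
rewrite big1 // => b _.
have [/eqP h1|h1] := eqVneq (x : nat) ((y + b) %% dL)%N; last by rewrite mul0r.
have [/eqP h2|h2] := eqVneq (z : nat) ((y + b) %% dL)%N; last by rewrite mulr0.
by exfalso; move: xz; rewrite -(inj_eq val_inj) /= (eqP h1) (eqP h2) eqxx.
Qed.

Lemma D1_col (b : 'I_dL * 'I_dL) (y : 'I_dL) :
  \sum_(x < dL) displ1 C b x y * (displ1 C b x y)^* = 1.
Proof.
rewrite -(count_shift' y b.1); apply: eq_bigr => x _.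
rewrite displ1E; have tu := tau_unit; have ou := omega_unit.
set ta := wh_tau C dL in tu *; set om := wh_omega C dL in ou *; clearbody ta om.
rewrite !rmorphM !rmorphXn /= rmorph_nat.
transitivity ((ta * ta^*) ^+ (b.1 * b.2) *
  (((x : nat) == (y + b.1) %% dL)%N%:R * ((x : nat) == (y + b.1) %% dL)%N%:R) *
  (om * om^*) ^+ (b.2 * y)); first by rewrite !exprMn; ring.
by rewrite tu ou !expr1n mul1r mulr1 -natrM mulnb andbb.
Qed.

End Single.

Section Multi.
Variable C : numClosedFieldType.
Variables dL n : nat.
Hypothesis hdL : (1 < dL)%N.

Let dL0 : (0 < dL)%N. Proof. exact: ltnW. Qed.

Lemma digit_inj (k k' : 'I_(dL ^ n)) : (forall i, digit k i = digit k' i) -> k = k'.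
Proof.
move=> H.
have E : forall j, (j <= n)%N -> (k %/ dL ^ (n - j) = k' %/ dL ^ (n - j))%N.
  elim=> [_|j IH jn].
    by rewrite subn0 !divn_small // ltn_ord.
  have := H (Ordinal jn) => /(congr1 val) /=.
  have -> : (n.-1 - j = n - j.+1)%N by rewrite -subn1 subnAC subn1 -subnS.
  move=> hd; move: (IH (ltnW jn)).
  have -> : (n - j = (n - j.+1).+1)%N by rewrite subnSK.
  rewrite expnSr !divnMA => IH'.
  by rewrite (divn_eq (k %/ dL ^ (n - j.+1)) dL) (divn_eq (k' %/ dL ^ (n - j.+1)) dL) IH' hd.
have := E n (leqnn n); rewrite subnn expn0 !divn1 => h; exact: val_inj.
Qed.

Definition dig (k : 'I_(dL ^ n)) : {ffun 'I_n -> 'I_dL} := [ffun i => digit k i].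

Lemma dig_bij : bijective dig.
Proof.
apply: inj_card_bij.
  by move=> k k' /ffunP h; apply: digit_inj => i; have := h i; rewrite !ffunE.
by rewrite card_ffun !card_ord.
Qed.

Lemma sum_dig (F : {ffun 'I_n -> 'I_dL} -> C) :
  \sum_(k < dL ^ n) F (dig k) = \sum_f F f.
Proof. by rewrite [RHS](reindex dig) //; apply: onW_bij; exact: dig_bij. Qed.

Lemma prod_bool (I : finType) (P : pred I) :
  \prod_(i : I) ((P i)%:R : C) = [forall i, P i]%:R.
Proof.
case: (boolP [forall i, P i]) => [/forallP h|/forallPn [i hi]].
  by rewrite big1 // => i _; rewrite h.
by rewrite (bigD1 i) //= (negbTE hi) mul0r.
Qed.

Lemma displ_comp (k j m l : 'I_(dL ^ n)) :
  \sum_(a : phase_pt dL n) displ C a k j * (displ C a m l)^* =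
  (dL ^ n)%:R * ((k == m) && (j == l))%:R.
Proof.
rewrite (eq_bigr (fun a : phase_pt dL n => \prod_i (displ1 C (a i) (digit k i) (digit j i) *
   (displ1 C (a i) (digit m i) (digit l i))^*))); last first.
  by move=> a _; rewrite !mxE rmorph_prod /= -big_split.
rewrite -(bigA_distr_bigA (fun (i : 'I_n) (b : 'I_dL * 'I_dL) => displ1 C b (digit k i) (digit j i) *
   (displ1 C b (digit m i) (digit l i))^*)).
under eq_bigr => i _ do rewrite D1_comp //.
rewrite big_split /= prodr_const card_ord natrX prod_bool; congr (_ * _%:R).
congr (nat_of_bool _).
apply/idP/idP => [/forallP h|/andP[/eqP -> /eqP ->]]; last by apply/forallP => i; rewrite !eqxx.
apply/andP; split; apply/eqP/digit_inj => i.
  by case/andP: (h i) => /eqP.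
by case/andP: (h i) => _ /eqP.
Qed.

Definition a0 : phase_pt dL n := [ffun _ => (Ordinal dL0, Ordinal dL0)].

Lemma displ1_0 (x y : 'I_dL) : displ1 C (Ordinal dL0, Ordinal dL0) x y = (x == y)%:R.
Proof.
rewrite displ1E //= muln0 !expr0 mul1r mulr1 addn0 modn_small //.
Qed.

Lemma displ_a0 : displ C a0 = 1%:M.
Proof.
apply/matrixP => j k; rewrite !mxE.
rewrite (eq_bigr (fun i => (digit j i == digit k i)%:R)); last first.
  by move=> i _; rewrite ffunE displ1_0.
rewrite (prod_bool (fun i => digit j i == digit k i)).
suff -> : [forall i, digit j i == digit k i] = (j == k) by [].
apply/forallP/eqP => [h|-> i //]; apply: digit_inj => i; exact/eqP/h.
Qed.

Lemma card_phase : #|phase_pt dL n| = (dL ^ n * dL ^ n)%N.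
Proof. by rewrite card_ffun card_prod !card_ord expnMn. Qed.

Lemma col_norm (a : phase_pt dL n) (j : 'I_(dL ^ n)) :
  \sum_(k < dL ^ n) displ C a k j * (displ C a k j)^* = 1.
Proof.
transitivity (\sum_(f : {ffun 'I_n -> 'I_dL}) \prod_i (displ1 C (a i) (f i) (digit j i) *
   (displ1 C (a i) (f i) (digit j i))^*)).
  rewrite -sum_dig; apply: eq_bigr => k _.
  by rewrite !mxE rmorph_prod /= -big_split /=; apply: eq_bigr => i _; rewrite ffunE.
rewrite -(bigA_distr_bigA (fun (i : 'I_n) (x : 'I_dL) => displ1 C (a i) x (digit j i) *
   (displ1 C (a i) x (digit j i))^*)).
by rewrite big1 // => i _; rewrite D1_col.
Qed.

End Multi.

Section Gen.
Variable C : numClosedFieldType.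
Local Open Scope sesquilinear_scope.

Lemma parseval_gen (I J : finType) (f : I -> C) (g : J -> I -> C) (c : C) :
  (forall p q, \sum_b g b p * (g b q)^* = c * (p == q)%:R) ->
  \sum_b (\sum_p f p * g b p) * (\sum_p f p * g b p)^* = c * \sum_p f p * (f p)^*.
Proof.
move=> H.
under eq_bigr => b _ do rewrite rmorph_sum big_distrlr /=.
rewrite exchange_big /=; under eq_bigr => p _ do rewrite exchange_big /=.
rewrite mulr_sumr; apply: eq_bigr => p _.
rewrite (bigD1 p) //= [X in _ + X]big1 ?addr0.
  rewrite (eq_bigr (fun b => (f p * (f p)^*) * (g b p * (g b p)^*))); last first.
    by move=> b _; rewrite rmorphM /=; ring.
  by rewrite -mulr_sumr H eqxx mulr1 mulrC.
move=> q qp; rewrite (eq_bigr (fun b => (f p * (f q)^*) * (g b p * (g b q)^*))); last first.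
  by move=> b _; rewrite rmorphM /=; ring.
by rewrite -mulr_sumr H eq_sym (negbTE qp) !mulr0.
Qed.

Definition nrm2 m n (M : 'M[C]_(m, n)) := \sum_i \sum_j M i j * (M i j)^*.

Lemma trace_mul m n (A : 'M[C]_(m, n)) (B : 'M[C]_(n, m)) :
  \tr (A *m B) = \sum_i \sum_k A i k * B k i.
Proof. by rewrite /mxtrace; apply: eq_bigr => i _; rewrite mxE. Qed.

Lemma nrm2_tr m n (M : 'M[C]_(m, n)) : \tr (M *m M ^t*) = nrm2 M.
Proof. rewrite trace_mul; apply: eq_bigr => i _; apply: eq_bigr => k _; by rewrite !mxE. Qed.

Lemma nrm2_ge0 m n (M : 'M[C]_(m, n)) : 0 <= nrm2 M.
Proof. by apply: sumr_ge0 => i _; apply: sumr_ge0 => j _; exact: mul_conjC_ge0. Qed.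

Lemma nrm2_eq0 m n (M : 'M[C]_(m, n)) : nrm2 M = 0 -> M = 0.
Proof.
move=> /eqP; rewrite psumr_eq0 => [/allP H|i _]; last first.
  by apply: sumr_ge0 => j _; exact: mul_conjC_ge0.
apply/matrixP => i j; rewrite mxE.
have /implyP /(_ isT) := H i (mem_index_enum i).
rewrite psumr_eq0 => [/allP /(_ j (mem_index_enum j)) /implyP /(_ isT)|k _]; last exact: mul_conjC_ge0.
by rewrite mul_conjC_eq0 => /eqP.
Qed.

Lemma conjmx_mul m n p (A : 'M[C]_(m, n)) (B : 'M[C]_(n, p)) :
  (A *m B) ^t* = B ^t* *m A ^t*.
Proof. by rewrite trmx_mul map_mxM. Qed.

Lemma conjmx1 m : (1%:M : 'M[C]_m) ^t* = 1%:M.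
Proof. by rewrite trmx1 map_mx1. Qed.

End Gen.

Section Main.
Variable C : numClosedFieldType.
Local Open Scope sesquilinear_scope.
Variables dL n : nat.
Hypothesis hdL : (1 < dL)%N.
Local Notation d := (dL ^ n)%N.
Local Notation D a := (@displ C dL n a).

Lemma sum_delta (I : finType) (k : I) (F : I -> C) : \sum_j (k == j)%:R * F j = F k.
Proof.
rewrite (bigD1 k) //= eqxx mul1r [X in _ + X]big1 ?addr0 // => j /negbTE.
by rewrite eq_sym => ->; rewrite mul0r.
Qed.

Lemma pars (M : 'M[C]_d) :
  \sum_b \tr (M *m D b) * (\tr (M *m D b))^* = d%:R * nrm2 M.
Proof.
have e b : \tr (M *m D b) = \sum_(p : 'I_d * 'I_d) M p.1 p.2 * D b p.2 p.1.
  by rewrite trace_mul pair_bigA.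
under eq_bigr => b _ do rewrite e.
rewrite (@parseval_gen _ _ _ (fun p => M p.1 p.2) (fun b p => D b p.2 p.1) d%:R).
  by rewrite /nrm2 pair_bigA.
move=> [p1 p2] [q1 q2]; by rewrite displ_comp //= xpair_eqE andbC.
Qed.

Lemma pars' (N : 'M[C]_d) :
  \sum_a \tr ((D a)^t* *m N) * (\tr ((D a)^t* *m N))^* = d%:R * nrm2 N.
Proof.
have e a : \tr ((D a)^t* *m N) = \sum_(p : 'I_d * 'I_d) N p.2 p.1 * (D a p.2 p.1)^*.
  rewrite trace_mul pair_bigA; apply: eq_bigr => p _; by rewrite !mxE mulrC.
under eq_bigr => a _ do rewrite e.
rewrite (@parseval_gen _ _ _ (fun p => N p.2 p.1) (fun a p => (D a p.2 p.1)^*) d%:R).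
  by rewrite /nrm2 exchange_big pair_bigA.
move=> [p1 p2] [q1 q2] /=.
transitivity ((\sum_a D a p2 p1 * (D a q2 q1)^*)^*).
  rewrite rmorph_sum; apply: eq_bigr => a _; by rewrite rmorphM.
by rewrite displ_comp // rmorphM /= !rmorph_nat xpair_eqE andbC.
Qed.

Lemma tw (A B : 'M[C]_d) :
  \sum_a \tr ((D a)^t* *m A *m D a *m B) = d%:R * \tr A * \tr B.
Proof.
have e a : \tr ((D a)^t* *m A *m D a *m B) =
    \sum_i \sum_l \sum_k \sum_j (A j k * B l i) * (D a k l * (D a j i)^*).
  rewrite /mxtrace; apply: eq_bigr => i _; rewrite mxE; apply: eq_bigr => l _.
  rewrite mxE mulr_suml; apply: eq_bigr => k _; rewrite mxE !mulr_suml.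
  by apply: eq_bigr => j _; rewrite !mxE; ring.
under eq_bigr => a _ do rewrite e.
rewrite exchange_big /=.
transitivity (\sum_(i < d) \sum_(l < d) \sum_(k < d) \sum_(j < d)
    (A j k * B l i) * (d%:R * ((k == j) && (l == i))%:R)).
  apply: eq_bigr => i _; rewrite exchange_big /=; apply: eq_bigr => l _.
  rewrite exchange_big /=; apply: eq_bigr => k _.
  rewrite exchange_big /=; apply: eq_bigr => j _.
  by rewrite -mulr_sumr displ_comp.
transitivity ((\sum_i \sum_k B i i * A k k) * d%:R); last first.
  by rewrite -big_distrlr /= /mxtrace; ring.
rewrite mulr_suml; apply: eq_bigr => i _; rewrite mulr_suml.
rewrite (bigD1 i) //= [X in _ + X]big1 ?addr0; last first.
  move=> l li; apply: big1 => k _; apply: big1 => j _.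
  by rewrite (negbTE li) andbF /= !mulr0.
apply: eq_bigr => k _.
rewrite (bigD1 k) //= [X in _ + X]big1 ?addr0; last first.
  by move=> j jk; rewrite eq_sym (negbTE jk) /= !mulr0.
by rewrite !eqxx /= mulr1; ring.
Qed.

Lemma tr_DD a : \tr ((D a)^t* *m D a) = d%:R.
Proof.
rewrite trace_mul (eq_bigr (fun _ => 1)) ?sumr_const ?card_ord //.
move=> i _; rewrite -(col_norm C hdL a i); apply: eq_bigr => k _; by rewrite !mxE mulrC.
Qed.

Variable U : 'M[C]_d.
Local Notation P := (U *m U ^t*).
Definition Mr a := U ^t* *m (D a)^t* *m U.
Definition Nc b := U *m D b *m U ^t*.

Lemma d_neq0 : (d%:R : C) != 0.
Proof. by rewrite pnatr_eq0 expn_eq0 negb_and; apply/orP; left; rewrite -lt0n ltnW. Qed.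

Lemma conj_dinv : ((d%:R : C)^-1)^* = (d%:R)^-1.
Proof. by rewrite fmorphV /= rmorph_nat. Qed.

Lemma frakD_row a b : frakD U a b =
  ((d%:R : C)^-1) ^+ 2 * (\tr (Mr a *m D b) * (\tr (Mr a *m D b))^*).
Proof.
rewrite /frakD normCK /frakC rmorphM /= conj_dinv.
have -> : \tr ((D a)^t* *m U *m D b *m U ^t*) = \tr (Mr a *m D b).
  by rewrite mxtrace_mulC /Mr !mulmxA.
ring.
Qed.

Lemma frakD_col a b : frakD U a b =
  ((d%:R : C)^-1) ^+ 2 * (\tr ((D a)^t* *m Nc b) * (\tr ((D a)^t* *m Nc b))^*).
Proof.
rewrite /frakD normCK /frakC rmorphM /= conj_dinv /Nc !mulmxA.
ring.
Qed.

Lemma row_sum a : \sum_b frakD U a b = (d%:R)^-1 * \tr ((D a)^t* *m P *m D a *m P).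
Proof.
under eq_bigr => b _ do rewrite frakD_row.
rewrite -mulr_sumr pars -nrm2_tr /Mr !conjmx_mul !trmxCK.
rewrite -!mulmxA [in LHS]mxtrace_mulC !mulmxA.
by rewrite expr2 -mulrA mulKf // d_neq0.
Qed.

Lemma col_sum b : \sum_a frakD U a b = (d%:R)^-1 * \tr (Nc b *m (Nc b)^t*).
Proof.
under eq_bigr => a _ do rewrite frakD_col.
by rewrite -mulr_sumr pars' nrm2_tr expr2 -mulrA mulKf // d_neq0.
Qed.

End Main.

Theorem lemma1 (C : numClosedFieldType) (dL n : nat) (hdL : (2 <= dL)%N)
  (hn : (1 <= n)%N) (U : 'M[C]_(dL ^ n)) :
  bistochastic (frakD U) <-> U \is unitarymx.
Proof.
Local Open Scope sesquilinear_scope.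
have hdL' : (1 < dL)%N := hdL.
have dn0 := d_neq0 C n hdL'.
split.
- case=> _ Hr _.
  have H0 := Hr (a0 n hdL').
  rewrite (row_sum hdL') displ_a0 conjmx1 mul1mx mulmx1 in H0.
  have trPP : \tr ((U *m U ^t*) *m (U *m U ^t*)) = (dL ^ n)%:R.
    by rewrite -[LHS](mulVKf dn0) H0 mulr1.
  have tot : \sum_a \sum_b frakD U a b = ((dL ^ n) * (dL ^ n))%:R.
    by rewrite (eq_bigr (fun _ => 1)) // sumr_const card_phase.
  rewrite (eq_bigr _ (fun a _ => row_sum hdL' U a)) in tot.
  rewrite -mulr_sumr (tw hdL') -mulrA mulKf // in tot.
  have trP0 : 0 <= \tr (U *m U ^t*) by rewrite nrm2_tr nrm2_ge0.
  have trPd : \tr (U *m U ^t*) = (dL ^ n)%:R.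
    have : (\tr (U *m U ^t*) - (dL ^ n)%:R) * (\tr (U *m U ^t*) + (dL ^ n)%:R) = 0.
      by rewrite natrM in tot; rewrite mulrDr !mulrBl tot; ring.
    move/eqP; rewrite mulf_eq0 => /orP[/eqP h|h]; first by apply/eqP; rewrite -subr_eq0 h.
    have : 0 < \tr (U *m U ^t*) + (dL ^ n)%:R.
      by apply: ltr_wpDl => //; rewrite lt_def dn0 ler0n.
    by rewrite (eqP h) ltxx.
  set P := U *m U ^t* in trPP trP0 trPd *.
  have PP : P ^t* = P by rewrite /P conjmx_mul trmxCK.
  have EE : (P - 1%:M) ^t* = P - 1%:M.
    by rewrite linearB /= map_mxB PP conjmx1.
  have : nrm2 (P - 1%:M) = 0.
    rewrite -nrm2_tr EE mulmxBl !mulmxBr mulmx1 mul1mx !linearB /= trPP trPd mulmx1 mxtrace1.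
    by rewrite !subrr.
  move/nrm2_eq0/eqP; rewrite subr_eq0 => /eqP hP.
  by apply/unitarymxP.
- move/unitarymxP => hP; have hQ : U ^t* *m U = 1%:M by apply: mulmx1C.
  split.
  + by move=> a b; rewrite /frakD exprn_ge0.
  + move=> a; rewrite (row_sum hdL') hP !mulmx1 (tr_DD C hdL') mulVf //.
  + move=> b; rewrite (col_sum hdL') /Nc !conjmx_mul !trmxCK !mulmxA.
    rewrite -[U *m displ C b *m U ^t* *m U]mulmxA hQ mulmx1.
    rewrite mxtrace_mulC !mulmxA hQ mul1mx mxtrace_mulC (tr_DD C hdL') mulVf //.
Qed.
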